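(* Let $G(V,E)$ be any graph with $m\ge1$ edges, let $\{u,v\}$ be an edge chosen uniformly at random from $E$, and let $t=\lceil \min(d_u,d_v)/\sqrt{m}\rceil$. Then $\mathbb{E}[t]=O(1)$, where the constant is absolute.
   Context: $d_v$ denotes the degree of vertex $v$ in $G$. *)

(* Defs.v *)
From mathcomp Require Import all_boot all_order all_algebra.
From mathcomp Require Import reals.
Set Implicit Arguments. Unset Strict Implicit. Unset Printing Implicit Defensive.
Import Order.TTheory GRing.Theory Num.Theory.
Local Open Scope ring_scope.

Definition simple_graph (T : finType) (e : rel T) : Prop :=
  symmetric e /\ irreflexive e.

Definition deg (T : finType) (e : rel T) (v : T) : nat := #|[set w | e v w]|.

Definition edges (T : finType) (e : rel T) : {set {set T}} :=
  [set [set p.1; p.2] | p in [set p : T * T | e p.1 p.2]].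

Definition nedges (T : finType) (e : rel T) : nat := #|edges e|.

Definition edge_mindeg (T : finType) (e : rel T) (f : {set T}) : nat :=
  \big[minn/#|T|]_(x in f) deg e x.

Definition edge_t (R : realType) (T : finType) (e : rel T) (f : {set T}) : int :=
  Num.ceil ((edge_mindeg e f)%:R / Num.sqrt ((nedges e)%:R) : R).

Definition expected_t (R : realType) (T : finType) (e : rel T) : R :=
  (\sum_(f in edges e) (edge_t R e f)%:~R) / (nedges e)%:R.

(* Main.v *)
Require Import Defs.
From mathcomp Require Import all_boot all_order all_algebra.
From mathcomp Require Import reals.
From mathcomp Require Import lra.
Import Order.TTheory GRing.Theory Num.Theory.
Local Open Scope ring_scope.

Section Aux.
Variables (T : finType) (e : rel T).
Hypothesis esym : symmetric e.
Hypothesis eirr : irreflexive e.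

Definition hp (p : T * T) : {set T} := [set p.1; p.2].

Lemma mind_le (f : {set T}) x : x \in f -> (edge_mindeg e f <= deg e x)%N.
Proof.
move=> xf; rewrite /edge_mindeg unlock.
have : x \in index_enum T by rewrite mem_index_enum.
elim: (index_enum T) => //= y r IH; rewrite inE => /orP [/eqP <- | xr].
  by rewrite xf geq_minl.
case: ifP => _; last exact: IH.
by rewrite geq_min IH ?orbT.
Qed.

Lemma hp_edges p : e p.1 p.2 -> hp p \in edges e.
Proof. by move=> Q; apply/imsetP; exists p; rewrite ?inE. Qed.

Lemma fiber_ex (f : {set T}) : f \in edges e -> exists p, e p.1 p.2 && (hp p == f).
Proof.
by case/imsetP => p; rewrite inE => Q ->; exists p; rewrite Q eqxx.
Qed.

Lemma fiber_le2 (f : {set T}) : f \in edges e ->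
  (\sum_(p | e p.1 p.2 && (hp p == f)) 1 <= 2)%N.
Proof.
case/imsetP => -[a b]; rewrite inE /= => eab ->.
apply: (@leq_trans #|[set (a, b); (b, a)]|).
  rewrite (eq_bigl (fun p => p \in [set p | e p.1 p.2 && (hp p == [set a; b])])); last by move=> p; rewrite inE.
  rewrite sum1_card; apply: subset_leq_card; apply/subsetP => -[x y].
  rewrite inE /= => /andP [Qxy /eqP H].
  have hx : x \in [set a; b] by rewrite -H /hp set21.
  have hy : y \in [set a; b] by rewrite -H /hp set22.
  move: hx hy; rewrite !inE.
  case/orP => /eqP ?; case/orP => /eqP ?; subst; rewrite ?eqxx ?orbT //;
    by move: Qxy => /=; rewrite eirr.
by rewrite cards2; case: (_ != _).
Qed.

Lemma deg_sum u : deg e u = (\sum_(v | e u v) 1)%N.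
Proof.
rewrite /deg -sum1_card; apply: eq_bigl => v; by rewrite inE.
Qed.

Lemma P_le : (\sum_u deg e u <= 2 * nedges e)%N.
Proof.
under eq_bigr => u _ do rewrite deg_sum.
rewrite pair_big_dep /=.
rewrite (partition_big hp (mem (edges e))) /=; last by move=> p; apply: hp_edges.
rewrite mulnC /nedges -sum_nat_const; apply: leq_sum => f fE.
exact: fiber_le2.
Qed.

Lemma sum_edges_le (R : realType) (G : {set T} -> R) : (forall f, 0 <= G f) ->
  \sum_(f in edges e) G f <= \sum_(p | e p.1 p.2) G (hp p).
Proof.
move=> G0.
rewrite (partition_big hp (mem (edges e))) /=; last by move=> p; apply: hp_edges.
apply: ler_sum => f fE; have [p0 Hp0] := fiber_ex _ fE.
rewrite (bigD1 p0) //=; move/andP: Hp0 => [_ /eqP ->].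
by rewrite lerDl sumr_ge0.
Qed.

End Aux.

Theorem lemma4p2 :
  exists C : nat, forall (R : realType) (T : finType) (e : rel T),
    simple_graph e -> (1 <= nedges e)%N -> expected_t R e <= C%:R.
Proof.
exists 8%N => R T e [esym eirr] hm.
set m := nedges e.
have m0 : (0 : R) < m%:R by rewrite ltr0n.
set s : R := Num.sqrt m%:R.
have s0 : 0 < s by rewrite sqrtr_gt0.
have ss : s * s = m%:R by rewrite -expr2 sqr_sqrtr // ltW.
pose d u : R := (deg e u)%:R.
pose P : R := \sum_u d u.
pose H : R := \sum_v (if s < d v then 1 else 0).
have PE : P = (\sum_u deg e u)%N%:R by rewrite natr_sum.
have Pm : P <= 2 * m%:R.
  by rewrite PE -natrM ler_nat; apply: P_le.
have P0 : 0 <= P by rewrite sumr_ge0.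
have H0 : 0 <= H by rewrite sumr_ge0 // => v _; case: ifP.
have Hs : H * s <= P.
  rewrite mulr_suml; apply: ler_sum => v _; case: ifP => [/ltW|_]; rewrite ?mul1r ?mul0r //.
have PH : P * H / s <= 4 * m%:R.
  rewrite ler_pdivrMr //.
  have h1 : P * (H * s) <= P * P := ler_wpM2l P0 Hs.
  have h2 : P * P <= (4 * m%:R * s) * s by rewrite -mulrA ss; nra.
  rewrite -(ler_pM2r s0) -mulrA; exact: le_trans h1 h2.
rewrite /expected_t ler_pdivrMr //.
have step1 : \sum_(f in edges e) ((edge_t R e f)%:~R : R) <=
             \sum_(f in edges e) ((edge_mindeg e f)%:R / s + 1).
  apply: ler_sum => f _; rewrite /edge_t -/m -/s.
  have := ceilB1_lt ((edge_mindeg e f)%:R / s); rewrite intrB => h.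
  rewrite -lerBlDr; exact: ltW.
apply: (le_trans step1).
apply: le_trans; first by apply: sum_edges_le => f; rewrite addr_ge0 // divr_ge0 // ltW.
have -> : \sum_(p | e p.1 p.2) ((edge_mindeg e (hp T p))%:R / s + 1) =
   \sum_u \sum_(v | e u v) ((edge_mindeg e (hp T (u, v)))%:R / s + 1).
  by rewrite pair_big_dep /=; apply: eq_big => [[u v]|[u v] _].

have inner : forall u, \sum_(v | e u v) ((edge_mindeg e (hp T (u, v)))%:R / s + 1)
               <= 2 * d u + d u / s * H.
  move=> u.
  have -> : 2 * d u = \sum_(v | e u v) 2.
    by rewrite /d deg_sum natr_sum mulr_sumr; apply: eq_bigr => v _; rewrite mulr1.
  have -> : d u / s * H = \sum_v (if s < d v then d u / s else 0).
    by rewrite mulr_sumr; apply: eq_bigr => v _; case: ifP; rewrite ?mulr1 ?mulr0.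
  apply: (@le_trans _ _ (\sum_(v | e u v) (2 + if s < d v then d u / s else 0))).
    apply: ler_sum => v euv.
    have hu : (edge_mindeg e (hp T (u, v)) <= deg e u)%N by apply: mind_le; rewrite /hp set21.
    have hv : (edge_mindeg e (hp T (u, v)) <= deg e v)%N by apply: mind_le; rewrite /hp set22.
    move: hu hv; rewrite -!(ler_nat R) -/(d u) -/(d v).
    set x : R := (edge_mindeg e (hp T (u, v)))%:R => hu hv.
    case: ifP => hs.
      have : x / s <= d u / s by rewrite ler_pM2r ?invr_gt0.
      lra.
    have : x / s <= 1.
      by rewrite ler_pdivrMr // mul1r; apply: (le_trans hv); rewrite leNgt hs.
    lra.
  rewrite big_split /= lerD2l.
  rewrite [X in _ <= X](bigID (fun v => e u v)) /= lerDl sumr_ge0 // => v _.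
  by case: ifP => // _; rewrite divr_ge0 // ltW.
apply: (le_trans (ler_sum _ (fun u _ => inner u))).
rewrite big_split /= -mulr_sumr -!mulr_suml -/P.
have : P * H / s = P / s * H by rewrite mulrAC.
lra.
Qed.
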